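(* Consider NEAR-DGD$^t$ started from a common point $y_{i,0}=s_0$ ($1\le i\le n$). Suppose each $f_i$ is $\mu_i$-strongly convex with $L_i$-Lipschitz gradient; let $x^\star$ be the unique minimizer of $h=\sum_if_i$, and let $$0<\alpha\le\min\{1/L,\,c_4\}.$$ Then for every $\delta>0$ and all $k=0,1,2,\ldots$, $$\|\bar x_{k+1}-x^\star\|^2\le c_1^2\|\bar x_k-x^\star\|^2+c_3^2\beta^{2t},$$ where $c_1^2=1-\alpha c_2+\alpha\delta-\alpha^2\delta c_2$ and $c_3^2=\alpha(\alpha+\delta^{-1})D^2L^2$. In particular, if $\alpha c_2<1$ and $\delta=\frac{c_2}{2(1-\alpha c_2)}$, then $c_1=\sqrt{1-\alpha c_2/2}\in(0,1)$ and for all $k\ge0$ $$\|\bar x_k-x^\star\|\le c_1^k\|\bar x_0-x^\star\|+\frac{LD\beta^t}{c_2}\sqrt{2(2-\alpha c_2)}.$$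
   Context: NEAR-DGD$^t$ (fixed integer $t\ge1$): $\mathbf{x}_k=\mathbf{Z}^t\mathbf{y}_k$, $\mathbf{y}_{k+1}=\mathbf{x}_k-\alpha\nabla\mathbf{f}(\mathbf{x}_k)$, where $\mathbf{Z}=\mathbf{W}\otimes I_p$, $\mathbf{W}$ a symmetric doubly-stochastic $n\times n$ matrix of a connected network ($w_{ii}>0$, $w_{ij}>0$ iff neighbours) with simple eigenvalue $1$ and other eigenvalues in $(-1,1)$, $\beta\in(0,1)$ its second largest eigenvalue magnitude; $\mathbf{x}=(x_1;\ldots;x_n)$, $\nabla\mathbf{f}(\mathbf{x})=(\nabla f_1(x_1);\ldots;\nabla f_n(x_n))$, $\bar x_k=\frac1n\sum_ix_{i,k}$. Constants: $L=\max_iL_i$, $\mu_{\bar f}=\frac1n\sum_i\mu_i$, $L_{\bar f}=\frac1n\sum_iL_i$, $c_2=\frac{2\mu_{\bar f}L_{\bar f}}{\mu_{\bar f}+L_{\bar f}}$, $c_4=\frac{2}{\mu_{\bar f}+L_{\bar f}}$, $D=\|\mathbf{y}_0-\mathbf{u}^\star\|+\frac{\nu+4}{\nu}\|\mathbf{u}^\star\|$ with $\mathbf{u}^\star=(u_1^\star;\ldots;u_n^\star)$, $u_i^\star=\arg\min f_i$, $\nu=2\alpha\gamma$, $\gamma=\min_i\frac{\mu_iL_i}{\mu_i+L_i}$. *)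

(* Defs.v *)
From Stdlib Require Import Reals Lra.
From HB Require Import structures.
From mathcomp Require Import all_boot.
Set Implicit Arguments. Unset Strict Implicit. Unset Printing Implicit Defensive.

Open Scope R_scope.

Lemma Rplus_assoc' : associative Rplus.
Proof. by move=> x y z; rewrite Rplus_assoc. Qed.
Lemma Rplus_comm' : commutative Rplus.
Proof. exact: Rplus_comm. Qed.
Lemma Rplus_0_l' : left_id 0 Rplus.
Proof. exact: Rplus_0_l. Qed.
HB.instance Definition _ := Monoid.isComLaw.Build R 0 Rplus
  Rplus_assoc' Rplus_comm' Rplus_0_l'.

Definition vec (p : nat) := 'I_p -> R.

Definition vadd p (u v : vec p) : vec p := fun j => u j + v j.
Definition vsub p (u v : vec p) : vec p := fun j => u j - v j.
Definition vscale p (a : R) (u : vec p) : vec p := fun j => a * u j.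
Definition inner p (u v : vec p) : R := \big[Rplus/0]_(j < p) (u j * v j).
Definition vnorm p (u : vec p) : R := sqrt (inner u u).

(* Stacked vectors x = (x_1; ...; x_n) in R^{np}, with Euclidean norm. *)
Definition svec (n p : nat) := 'I_n -> vec p.
Definition snorm n p (x : svec n p) : R :=
  sqrt (\big[Rplus/0]_(i < n) inner (x i) (x i)).
Definition ssub n p (x y : svec n p) : svec n p := fun i => vsub (x i) (y i).

Definition avg n p (x : svec n p) : vec p :=
  fun j => / INR n * \big[Rplus/0]_(i < n) x i j.

(* Application of Z = W (x) I_p to a stacked vector. *)
Definition mixZ n p (W : 'I_n -> 'I_n -> R) (y : svec n p) : svec n p :=
  fun i j => \big[Rplus/0]_(l < n) (W i l * y l j).

Definition is_eigenvalue n (W : 'I_n -> 'I_n -> R) (lam : R) : Prop :=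
  exists v : 'I_n -> R, (exists i, v i <> 0) /\
    forall i, \big[Rplus/0]_(l < n) (W i l * v l) = lam * v i.

Definition is_gradient p (f : vec p -> R) (g : vec p -> vec p) : Prop :=
  forall x d : vec p,
    derivable_pt_lim (fun s => f (vadd x (vscale s d))) 0 (inner (g x) d).

Definition strongly_convex p (mu : R) (f : vec p -> R) (g : vec p -> vec p) : Prop :=
  forall x y : vec p,
    f y >= f x + inner (g x) (vsub y x) + mu / 2 * (vnorm (vsub y x)) ^ 2.

Definition lipschitz_grad p (L : R) (g : vec p -> vec p) : Prop :=
  forall x y : vec p, vnorm (vsub (g x) (g y)) <= L * vnorm (vsub x y).

Fixpoint near_y n p (W : 'I_n -> 'I_n -> R) (t : nat) (alpha : R)
    (g : 'I_n -> vec p -> vec p) (y0 : svec n p) (k : nat) : svec n p :=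
  match k with
  | O => y0
  | S k' =>
      let x := iter t (mixZ W) (near_y W t alpha g y0 k') in
      fun i => vsub (x i) (vscale alpha (g i (x i)))
  end.

Definition near_x n p (W : 'I_n -> 'I_n -> R) (t : nat) (alpha : R)
    (g : 'I_n -> vec p -> vec p) (y0 : svec n p) (k : nat) : svec n p :=
  iter t (mixZ W) (near_y W t alpha g y0 k).

Definition Lmax n (Ls : 'I_n -> R) : R := \big[Rmax/0]_(i < n) Ls i.
Definition fbar_const n (cs : 'I_n -> R) : R := / INR n * \big[Rplus/0]_(i < n) cs i.
Definition c2_const (muf Lf : R) : R := 2 * muf * Lf / (muf + Lf).
Definition c4_const (muf Lf : R) : R := 2 / (muf + Lf).

(* Main.v *)
Require Import Defs.
From Stdlib Require Import Reals Lra Lia FunctionalExtensionality Classical.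
From HB Require Import structures.
From mathcomp Require Import all_boot.
From mathcomp Require all_order all_algebra classical_sets boolp reals topology normedtype matrix_normedtype derive Rstruct.
Set Implicit Arguments. Unset Strict Implicit. Unset Printing Implicit Defensive.
Open Scope R_scope.

Module AnPart.
Import all_order all_algebra classical_sets boolp reals topology normedtype matrix_normedtype derive.
Import Order.TTheory GRing.Theory Num.Theory.
Import numFieldNormedType.Exports.
Local Open Scope classical_set_scope.
Local Open Scope ring_scope.

Section An.
Variable R : realType.

Lemma cont_sum_seq (n : nat) (I : Type) (s : seq I) (F : I -> 'rV[R]_n -> R) :
  (forall i, continuous (F i)) -> continuous (fun c => \sum_(i <- s) F i c).
Proof.
move=> hF; elim: s => [|a s IH].
  under eq_fun do rewrite big_nil.
  by move=> x; apply: cst_continuous.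
under eq_fun do rewrite big_cons.
move=> x; exact: (cvgD (hF a x) (IH x)).
Qed.

Lemma rayleigh_max_mc (n : nat) (hn : (0 < n)%N) (B : 'I_n -> 'I_n -> R) :
  exists2 c : 'rV[R]_n, \sum_(i < n) (c ord0 i * c ord0 i) = 1 &
   forall d : 'rV[R]_n, \sum_(i < n) (d ord0 i * d ord0 i) = 1 ->
     \sum_(i < n) ((\sum_(l < n) (B i l * d ord0 l)) * (\sum_(l < n) (B i l * d ord0 l)))
     <= \sum_(i < n) ((\sum_(l < n) (B i l * c ord0 l)) * (\sum_(l < n) (B i l * c ord0 l))).
Proof.
pose N := fun c : 'rV[R]_n => \sum_(i < n) (c ord0 i * c ord0 i).
pose Q := fun c : 'rV[R]_n =>
  \sum_(i < n) ((\sum_(l < n) (B i l * c ord0 l)) * (\sum_(l < n) (B i l * c ord0 l))).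
have cN : continuous N.
  apply: cont_sum_seq => i x.
  exact: (cvgM (@coord_continuous _ _ _ ord0 i x) (@coord_continuous _ _ _ ord0 i x)).
have cQ : continuous Q.
  have cl : forall i, continuous (fun c : 'rV[R]_n => \sum_(l < n) (B i l * c ord0 l)).
    move=> i; apply: cont_sum_seq => l y.
    exact: (cvgM (@cst_continuous _ _ (B i l) y) (@coord_continuous _ _ _ ord0 l y)).
  apply: cont_sum_seq => i x; exact: (cvgM (cl i x) (cl i x)).
pose A := [set c : 'rV[R]_n | N c = 1].
have Acl : closed A.
  have h := proj1 (continuous_closedP N) cN _ (@closed_eq R 1). exact h.
have Kc : compact [set v : 'rV[R]_n | forall i, v ord0 i \in `[(-1 : R), 1]].
  apply: (@rV_compact _ _ (fun=> `[(-1 : R), 1]%classic)).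
  by move=> _; apply: segment_compact.
have Ac : compact A.
  apply: (subclosed_compact Acl Kc) => v /= Nv i.
  rewrite in_itv /=.
  have : v ord0 i * v ord0 i <= 1.
    rewrite -Nv /N (bigD1 i) //= lerDl.
    by apply: sumr_ge0 => j _; rewrite -expr2 sqr_ge0.
  move=> h; rewrite -ler_norml.
  have : `|v ord0 i| ^+ 2 <= 1 by rewrite real_normK ?num_real // expr2.
  by rewrite expr_le1.
have A0 : A !=set0.
  exists (\row_j (if j == Ordinal hn then 1 else 0)).
  rewrite /A /= /N (bigD1 (Ordinal hn)) //= !mxE eqxx mulr1 big1 ?addr0 //.
  by move=> j /negbTE hj; rewrite !mxE hj mulr0.
have [c cA cmax] := EVT_max_rV A0 Ac (continuous_subspaceT cQ).
exists c; first by move: cA; rewrite inE.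
by move=> d Nd; apply: cmax; rewrite inE.
Qed.
Lemma rayleigh_fun (n : nat) (hn : (0 < n)%N) (B : 'I_n -> 'I_n -> R) :
  exists v : 'I_n -> R, \sum_(i < n) (v i * v i) = 1 /\
   forall w : 'I_n -> R, \sum_(i < n) (w i * w i) = 1 ->
     \sum_(i < n) ((\sum_(l < n) (B i l * w l)) * (\sum_(l < n) (B i l * w l)))
     <= \sum_(i < n) ((\sum_(l < n) (B i l * v l)) * (\sum_(l < n) (B i l * v l))).
Proof.
have [c hc hmax] := @rayleigh_max_mc n hn B.
exists (fun i => c ord0 i); split => // w hw.
have := hmax (\row_j w j).
have e1 : forall l, (\row_j w j) ord0 l = w l by move=> l; rewrite mxE.
under eq_bigr do rewrite e1.
move=> h; have := h hw.
by under eq_bigr do under eq_bigr do rewrite e1.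
Qed.
End An.

End AnPart.

Module Br.
Import all_order all_algebra reals Rstruct.
Lemma rayleigh_R (m : nat) (hm : (0 < m)%N) (B : 'I_m -> 'I_m -> Rdefinitions.R) :
  exists v : 'I_m -> Rdefinitions.R,
    \big[Rplus/IZR Z0]_(i < m) Rmult (v i) (v i) = IZR (Zpos xH) /\
    forall w : 'I_m -> Rdefinitions.R, \big[Rplus/IZR Z0]_(i < m) Rmult (w i) (w i) = IZR (Zpos xH) ->
      Rle (\big[Rplus/IZR Z0]_(i < m) Rmult (\big[Rplus/IZR Z0]_(l < m) Rmult (B i l) (w l))
                                        (\big[Rplus/IZR Z0]_(l < m) Rmult (B i l) (w l)))
          (\big[Rplus/IZR Z0]_(i < m) Rmult (\big[Rplus/IZR Z0]_(l < m) Rmult (B i l) (v l))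
                                        (\big[Rplus/IZR Z0]_(l < m) Rmult (B i l) (v l))).
Proof.
have [v [hv hmax]] := @AnPart.rayleigh_fun Rdefinitions.R m hm B.
exists v; split; first exact: hv.
move=> w hw; apply/RleP; exact: hmax.
Qed.
End Br.

Section BigR.
Variable I : Type.

Lemma bigR_mull (r : seq I) (P : pred I) (F : I -> R) c :
  c * (\big[Rplus/0]_(i <- r | P i) F i) = \big[Rplus/0]_(i <- r | P i) (c * F i).
Proof.
elim/big_rec2: _ => [|i y1 y2 _ <-]; first ring. ring.
Qed.

Lemma bigR_opp (r : seq I) (P : pred I) (F : I -> R) :
  - (\big[Rplus/0]_(i <- r | P i) F i) = \big[Rplus/0]_(i <- r | P i) (- F i).
Proof.
elim/big_rec2: _ => [|i y1 y2 _ <-]; first ring. ring.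
Qed.

Lemma bigR_add (r : seq I) (P : pred I) (F G : I -> R) :
  (\big[Rplus/0]_(i <- r | P i) F i) + (\big[Rplus/0]_(i <- r | P i) G i)
  = \big[Rplus/0]_(i <- r | P i) (F i + G i).
Proof. by rewrite big_split. Qed.

Lemma bigR_sub (r : seq I) (P : pred I) (F G : I -> R) :
  (\big[Rplus/0]_(i <- r | P i) F i) - (\big[Rplus/0]_(i <- r | P i) G i)
  = \big[Rplus/0]_(i <- r | P i) (F i - G i).
Proof. unfold Rminus. by rewrite bigR_opp big_split. Qed.

Lemma bigR_ge0 (r : seq I) (P : pred I) (F : I -> R) :
  (forall i, P i -> 0 <= F i) -> 0 <= \big[Rplus/0]_(i <- r | P i) F i.
Proof.
move=> h; elim/big_rec: _ => [|i x Pi hx]; first lra.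
have := h i Pi; lra.
Qed.

Lemma bigR_le (r : seq I) (P : pred I) (F G : I -> R) :
  (forall i, P i -> F i <= G i) ->
  (\big[Rplus/0]_(i <- r | P i) F i) <= \big[Rplus/0]_(i <- r | P i) G i.
Proof.
move=> h; elim/big_rec2: _ => [|i y1 y2 Pi hy]; first lra.
have := h i Pi; lra.
Qed.
End BigR.

Lemma bigR_const n c : \big[Rplus/0]_(i < n) c = INR n * c.
Proof.
elim: n => [|n IH]; first by rewrite big_ord0 /=; ring.
rewrite big_ord_recr IH S_INR; change (INR n * c + c = (INR n + 1) * c); ring.
Qed.

Lemma bigR_term_le n (F : 'I_n -> R) (i : 'I_n) :
  (forall j, 0 <= F j) -> F i <= \big[Rplus/0]_(j < n) F j.
Proof.
move=> h; rewrite (bigD1 i) //=.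
have : 0 <= \big[Rplus/0]_(j < n | j != i) F j by apply: bigR_ge0 => j _; exact: h j.
change (0 <= \big[Rplus/0]_(j < n | j != i) F j -> F i <= F i + \big[Rplus/0]_(j < n | j != i) F j).
lra.
Qed.

Lemma bigR_eq0 n (F : 'I_n -> R) :
  (forall j, 0 <= F j) -> \big[Rplus/0]_(j < n) F j = 0 -> forall j, F j = 0.
Proof.
move=> h hs j; have := bigR_term_le j h; have := h j; lra.
Qed.

Definition nsq p (u : vec p) := inner u u.

Ltac unf := rewrite /inner /nsq /vadd /vsub /vscale.

Section Vec.
Variable p : nat.
Implicit Types u v w : vec p.

Lemma inner_comm u v : inner u v = inner v u.
Proof. by apply: eq_bigr => j _; ring. Qed.

Lemma inner_addl u v w : inner (vadd u v) w = inner u w + inner v w.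
Proof. unf; rewrite bigR_add; apply: eq_bigr => j _; ring. Qed.
Lemma inner_subl u v w : inner (vsub u v) w = inner u w - inner v w.
Proof. unf; rewrite bigR_sub; apply: eq_bigr => j _; ring. Qed.
Lemma inner_scalel a u w : inner (vscale a u) w = a * inner u w.
Proof. unf; rewrite bigR_mull; apply: eq_bigr => j _; ring. Qed.
Lemma inner_addr u v w : inner w (vadd u v) = inner w u + inner w v.
Proof. by rewrite inner_comm inner_addl !(inner_comm w). Qed.
Lemma inner_subr u v w : inner w (vsub u v) = inner w u - inner w v.
Proof. by rewrite inner_comm inner_subl !(inner_comm w). Qed.
Lemma inner_scaler a u w : inner w (vscale a u) = a * inner w u.
Proof. by rewrite inner_comm inner_scalel (inner_comm w). Qed.

Lemma nsq_ge0 u : 0 <= nsq u.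
Proof. apply: bigR_ge0 => j _; nra. Qed.

Lemma vnorm_ge0 u : 0 <= vnorm u.
Proof. exact: sqrt_pos. Qed.

Lemma vnorm_sq u : vnorm u ^ 2 = nsq u.
Proof. rewrite /vnorm pow2_sqrt //; exact: nsq_ge0. Qed.

Lemma nsq_eq0 u : nsq u = 0 -> forall j, u j = 0.
Proof.
move=> h j; have := @bigR_eq0 p (fun j => u j * u j) (fun j => ltac:(nra)) h j.
move=> /= e; nra.
Qed.

Lemma CS_sq u v : inner u v ^ 2 <= nsq u * nsq v.
Proof.
have key : forall s, 0 <= nsq u - 2 * s * inner u v + s ^ 2 * nsq v.
  move=> s; have := nsq_ge0 (vsub u (vscale s v)).
  rewrite /nsq !(inner_subl, inner_subr, inner_scalel, inner_scaler) (inner_comm v u).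
  lra.
have hu := nsq_ge0 u; have hv := nsq_ge0 v.
case: (Req_dec (nsq v) 0) => hv0.
  case: (Req_dec (inner u v) 0) => hi; first by rewrite hi hv0; lra.
  exfalso.
  set s := (nsq u + 1) / (2 * inner u v).
  have k := key s; rewrite hv0 in k.
  have e : 2 * s * inner u v = nsq u + 1 by rewrite /s; field.
  lra.
set t := inner u v / nsq v.
have k := key t.
have e : t * nsq v = inner u v by rewrite /t; field.
have hv' : 0 < nsq v by lra.
nra.
Qed.

Lemma CS u v : inner u v <= vnorm u * vnorm v.
Proof.
have h := CS_sq u v.
have e : vnorm u * vnorm v = sqrt (nsq u * nsq v).
  rewrite sqrt_mult //; exact: nsq_ge0.
rewrite e; apply: Rle_trans (Rle_abs _) _.
rewrite -sqrt_Rsqr_abs; apply: sqrt_le_1_alt; rewrite /Rsqr; nra.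
Qed.

End Vec.

Section Vec2.
Variable p : nat.
Implicit Types u v w : vec p.

Lemma nsq_add u v : nsq (vadd u v) = nsq u + 2 * inner u v + nsq v.
Proof. rewrite /nsq !(inner_addl, inner_addr) (inner_comm v u); ring. Qed.
Lemma nsq_sub u v : nsq (vsub u v) = nsq u - 2 * inner u v + nsq v.
Proof. rewrite /nsq !(inner_subl, inner_subr) (inner_comm v u); ring. Qed.
Lemma nsq_scale a u : nsq (vscale a u) = a ^ 2 * nsq u.
Proof. rewrite /nsq !(inner_scalel, inner_scaler); ring. Qed.

Lemma sqrt_le_of_sq a b : 0 <= b -> a <= b ^ 2 -> sqrt a <= b.
Proof.
move=> hb h; rewrite -(sqrt_pow2 b hb); apply: sqrt_le_1_alt; lra.
Qed.

Lemma vnorm_add u v : vnorm (vadd u v) <= vnorm u + vnorm v.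
Proof.
rewrite {1}/vnorm; apply: sqrt_le_of_sq.
  have := vnorm_ge0 u; have := vnorm_ge0 v; lra.
change (nsq (vadd u v) <= (vnorm u + vnorm v) ^ 2).
rewrite nsq_add -(vnorm_sq u) -(vnorm_sq v).
have := CS u v; lra.
Qed.

Lemma vnorm_sub u v : vnorm (vsub u v) <= vnorm u + vnorm v.
Proof.
rewrite {1}/vnorm; apply: sqrt_le_of_sq.
  have := vnorm_ge0 u; have := vnorm_ge0 v; lra.
change (nsq (vsub u v) <= (vnorm u + vnorm v) ^ 2).
rewrite nsq_sub -(vnorm_sq u) -(vnorm_sq v).
have := CS u (vscale (-1) v); rewrite inner_scaler.
have -> : vnorm (vscale (-1) v) = vnorm v.
  rewrite /vnorm; change (sqrt (nsq (vscale (-1) v)) = sqrt (nsq v)).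
  by rewrite nsq_scale; f_equal; ring.
lra.
Qed.

Lemma vnorm_scale a u : vnorm (vscale a u) = Rabs a * vnorm u.
Proof.
rewrite /vnorm; change (sqrt (nsq (vscale a u)) = Rabs a * sqrt (nsq u)).
rewrite nsq_scale sqrt_mult.
- by rewrite -(pow2_abs a) sqrt_pow2 //; exact: Rabs_pos.
- nra.
- exact: nsq_ge0.
Qed.

End Vec2.

Definition sinner n p (x y : svec n p) := \big[Rplus/0]_(i < n) inner (x i) (y i).
Definition ssq n p (x : svec n p) := sinner x x.
Definition sadd n p (x y : svec n p) : svec n p := fun i => vadd (x i) (y i).
Definition sscale n p a (x : svec n p) : svec n p := fun i => vscale a (x i).

Section Stack.
Variables n p : nat.
Implicit Types x y z : svec n p.

Lemma sinner_comm x y : sinner x y = sinner y x.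
Proof. by apply: eq_bigr => i _; rewrite inner_comm. Qed.
Lemma sinner_addl x y z : sinner (sadd x y) z = sinner x z + sinner y z.
Proof. rewrite /sinner bigR_add; apply: eq_bigr => i _; exact: inner_addl. Qed.
Lemma sinner_subl x y z : sinner (ssub x y) z = sinner x z - sinner y z.
Proof. rewrite /sinner bigR_sub; apply: eq_bigr => i _; exact: inner_subl. Qed.
Lemma sinner_scalel a x z : sinner (sscale a x) z = a * sinner x z.
Proof. rewrite /sinner bigR_mull; apply: eq_bigr => i _; exact: inner_scalel. Qed.
Lemma sinner_addr x y z : sinner z (sadd x y) = sinner z x + sinner z y.
Proof. by rewrite sinner_comm sinner_addl !(sinner_comm z). Qed.
Lemma sinner_subr x y z : sinner z (ssub x y) = sinner z x - sinner z y.
Proof. by rewrite sinner_comm sinner_subl !(sinner_comm z). Qed.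
Lemma sinner_scaler a x z : sinner z (sscale a x) = a * sinner z x.
Proof. by rewrite sinner_comm sinner_scalel (sinner_comm z). Qed.
Lemma ssq_ge0 x : 0 <= ssq x.
Proof. apply: bigR_ge0 => i _; exact: nsq_ge0. Qed.
Lemma snorm_ge0 x : 0 <= snorm x.
Proof. exact: sqrt_pos. Qed.
Lemma snorm_sq x : snorm x ^ 2 = ssq x.
Proof. rewrite /snorm pow2_sqrt //; exact: ssq_ge0. Qed.

Lemma sCS_sq x y : sinner x y ^ 2 <= ssq x * ssq y.
Proof.
have key : forall s, 0 <= ssq x - 2 * s * sinner x y + s ^ 2 * ssq y.
  move=> s; have := ssq_ge0 (ssub x (sscale s y)).
  rewrite /ssq !(sinner_subl, sinner_subr, sinner_scalel, sinner_scaler) (sinner_comm y x).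
  lra.
have hu := ssq_ge0 x; have hv := ssq_ge0 y.
case: (Req_dec (ssq y) 0) => hv0.
  case: (Req_dec (sinner x y) 0) => hi; first by rewrite hi hv0; lra.
  exfalso.
  set s := (ssq x + 1) / (2 * sinner x y).
  have k := key s; rewrite hv0 in k.
  have e : 2 * s * sinner x y = ssq x + 1 by rewrite /s; field.
  lra.
set t := sinner x y / ssq y.
have k := key t.
have e : t * ssq y = sinner x y by rewrite /t; field.
have hv' : 0 < ssq y by lra.
nra.
Qed.

Lemma sCS x y : sinner x y <= snorm x * snorm y.
Proof.
have h := sCS_sq x y.
have e : snorm x * snorm y = sqrt (ssq x * ssq y).
  rewrite sqrt_mult //; exact: ssq_ge0.
rewrite e; apply: Rle_trans (Rle_abs _) _.
rewrite -sqrt_Rsqr_abs; apply: sqrt_le_1_alt; rewrite /Rsqr; nra.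
Qed.

Lemma ssq_add x y : ssq (sadd x y) = ssq x + 2 * sinner x y + ssq y.
Proof. rewrite /ssq !(sinner_addl, sinner_addr) (sinner_comm y x); ring. Qed.

Lemma snorm_add x y : snorm (sadd x y) <= snorm x + snorm y.
Proof.
rewrite {1}/snorm; apply: sqrt_le_of_sq.
  have := snorm_ge0 x; have := snorm_ge0 y; lra.
change (ssq (sadd x y) <= (snorm x + snorm y) ^ 2).
rewrite ssq_add -(snorm_sq x) -(snorm_sq y).
have := sCS x y; lra.
Qed.

End Stack.

Section BigOrd.
Variable n : nat.
Implicit Types F G : 'I_n -> R.
Lemma sumO_mull F c : c * (\big[Rplus/0]_(i < n) F i) = \big[Rplus/0]_(i < n) (c * F i).
Proof. exact: bigR_mull. Qed.
Lemma sumO_mulr F c : (\big[Rplus/0]_(i < n) F i) * c = \big[Rplus/0]_(i < n) (F i * c).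
Proof. rewrite Rmult_comm bigR_mull; apply: eq_bigr => i _; ring. Qed.
Lemma sumO_opp F : - (\big[Rplus/0]_(i < n) F i) = \big[Rplus/0]_(i < n) (- F i).
Proof. exact: bigR_opp. Qed.
Lemma sumO_add F G : (\big[Rplus/0]_(i < n) F i) + (\big[Rplus/0]_(i < n) G i)
  = \big[Rplus/0]_(i < n) (F i + G i).
Proof. exact: bigR_add. Qed.
Lemma sumO_sub F G : (\big[Rplus/0]_(i < n) F i) - (\big[Rplus/0]_(i < n) G i)
  = \big[Rplus/0]_(i < n) (F i - G i).
Proof. exact: bigR_sub. Qed.
End BigOrd.

Section Grad.
Variable p : nat.

Lemma vadd_shift (x d : vec p) s0 h :
  vadd (vadd x (vscale s0 d)) (vscale h d) = vadd x (vscale (s0 + h) d).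
Proof. apply: functional_extensionality => j; rewrite /vadd /vscale; ring. Qed.

Lemma vadd_scale0 (x d : vec p) : vadd x (vscale 0 d) = x.
Proof. apply: functional_extensionality => j; rewrite /vadd /vscale; ring. Qed.

Lemma vadd_scale1 (x y : vec p) : vadd x (vscale 1 (vsub y x)) = y.
Proof. apply: functional_extensionality => j; rewrite /vadd /vscale /vsub; ring. Qed.

Lemma vsub_addK (x d : vec p) c : vsub (vadd x (vscale c d)) x = vscale c d.
Proof. apply: functional_extensionality => j; rewrite /vadd /vscale /vsub; ring. Qed.

Lemma grad_line (f : vec p -> R) g (hg : is_gradient f g) x d s0 :
  derivable_pt_lim (fun s => f (vadd x (vscale s d))) s0
    (inner (g (vadd x (vscale s0 d))) d).
Proof.
have H := hg (vadd x (vscale s0 d)) d.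
move=> eps heps; have [del Hd] := H eps heps.
exists del => h hh0 hhd; have := Hd h hh0 hhd.
by rewrite !vadd_shift Rplus_0_l Rplus_0_r.
Qed.

Lemma dpl_quad a b c s :
  derivable_pt_lim (fun s => a * (s * s) + b * s + c) s (2 * a * s + b).
Proof.
move=> eps heps.
have hpos : 0 < eps / (Rabs a + 1).
  apply: Rdiv_lt_0_compat => //; have := Rabs_pos a; lra.
exists (mkposreal _ hpos) => h hh0 /= hh.
have -> : (a * ((s + h) * (s + h)) + b * (s + h) + c - (a * (s * s) + b * s + c)) / h
          - (2 * a * s + b) = a * h by field.
rewrite Rabs_mult.
have ha := Rabs_pos a.
have hh' : Rabs h * (Rabs a + 1) < eps.
  have e : eps = eps / (Rabs a + 1) * (Rabs a + 1) by field; lra.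
  rewrite e; apply: Rmult_lt_compat_r; lra.
have := Rabs_pos h; nra.
Qed.

Lemma descent (f : vec p -> R) g L (hg : is_gradient f g) (hl : lipschitz_grad L g)
  (hL : 0 <= L) x y :
  f y <= f x + inner (g x) (vsub y x) + L / 2 * nsq (vsub y x).
Proof.
set d := vsub y x; set K := inner (g x) d; set N := nsq d.
pose phi := fun s => f (vadd x (vscale s d)) - ((L / 2 * N) * (s * s) + K * s + 0).
pose phi' := fun s => inner (g (vadd x (vscale s d))) d - (2 * (L / 2 * N) * s + K).
have hd : forall c, 0 <= c <= 1 -> derivable_pt_lim phi c (phi' c).
  move=> c _; rewrite /phi /phi'.
  apply: derivable_pt_lim_minus; first exact: grad_line.
  exact: dpl_quad.
have [c [hc hc01]] := MVT_cor2 phi phi' 0 1 Rlt_0_1 hd.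
have hphi' : phi' c <= 0.
  rewrite /phi'.
  have e : inner (g (vadd x (vscale c d))) d = inner (vsub (g (vadd x (vscale c d))) (g x)) d + K.
    by rewrite inner_subl /K; ring.
  rewrite e.
  have h1 := CS (vsub (g (vadd x (vscale c d))) (g x)) d.
  have h2 := hl (vadd x (vscale c d)) x.
  rewrite vsub_addK vnorm_scale Rabs_right in h2; last lra.
  have h3 := vnorm_sq d; rewrite -/N in h3.
  have h4 := vnorm_ge0 d.
  have h5 := vnorm_ge0 (vsub (g (vadd x (vscale c d))) (g x)).
  nra.
have : phi 1 <= phi 0 by nra.
rewrite /phi vadd_scale0 /d vadd_scale1 -/d.
lra.
Qed.

Lemma grad_min_zero (f : vec p -> R) g (hg : is_gradient f g) u :
  (forall z, f u <= f z) -> forall j, g u j = 0.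
Proof.
move=> hu; apply: nsq_eq0.
have H := hg u (g u).
have := deriv_minimum (fun s => f (vadd u (vscale s (g u)))) (-1) 1 0 (exist _ _ H).
move=> /= h; rewrite /nsq; apply: h; try lra.
by move=> z _ _; rewrite vadd_scale0.
Qed.

End Grad.

Lemma dpl_big n (F : 'I_n -> R -> R) (l : 'I_n -> R) x :
  (forall i, derivable_pt_lim (F i) x (l i)) ->
  derivable_pt_lim (fun s => \big[Rplus/0]_(i < n) F i s) x (\big[Rplus/0]_(i < n) l i).
Proof.
move=> h.
have gen : forall (r : seq 'I_n), derivable_pt_lim (fun s => \big[Rplus/0]_(i <- r) F i s) x (\big[Rplus/0]_(i <- r) l i).
  elim => [|a r IH].
    rewrite big_nil.
    have -> : (fun s => \big[Rplus/0]_(i <- [::]) F i s) = (fun _ => 0).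
      by apply: functional_extensionality => s; rewrite big_nil.
    exact: derivable_pt_lim_const.
  rewrite big_cons.
  have -> : (fun s => \big[Rplus/0]_(i <- a :: r) F i s) = (fun s => F a s + \big[Rplus/0]_(i <- r) F i s).
    by apply: functional_extensionality => s; rewrite big_cons.
  exact: (derivable_pt_lim_plus _ _ _ _ _ (h a) IH).
exact: gen.
Qed.

Ltac merge_sums :=
  rewrite /nsq /inner /vsub /vadd /vscale /=;
  rewrite ?bigR_mull ?bigR_opp;
  repeat (rewrite ?bigR_mull ?bigR_opp; first [rewrite bigR_add | rewrite bigR_sub]);
  apply: eq_bigr => j _; field.

Section CC.
Variable p : nat.
Variables (F : vec p -> R) (G : vec p -> vec p) (mu L : R).
Hypothesis hmu : 0 < mu.
Hypothesis hL : 0 < L.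
Hypothesis sc : forall x y, F x + inner (G x) (vsub y x) + mu / 2 * nsq (vsub y x) <= F y.
Hypothesis dl : forall x y, F y <= F x + inner (G x) (vsub y x) + L / 2 * nsq (vsub y x).
Hypothesis lip : forall x y, vnorm (vsub (G x) (G y)) <= L * vnorm (vsub x y).

Let vv a y := vsub (vsub (G y) (G a)) (vscale mu (vsub y a)).

Lemma cc_half a y s :
  (s - (L - mu) / 2 * s ^ 2) * nsq (vv a y)
  <= F y - F a - inner (G a) (vsub y a) - mu / 2 * nsq (vsub y a).
Proof.
set w := vsub y (vscale s (vv a y)).
have h1 := sc a w; have h2 := dl y w.
have e : inner (G a) (vsub w a) + mu / 2 * nsq (vsub w a) - inner (G y) (vsub w y)
   - L / 2 * nsq (vsub w y) - inner (G a) (vsub y a) - mu / 2 * nsq (vsub y a)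
   = (s - (L - mu) / 2 * s ^ 2) * nsq (vv a y).
  rewrite /w /vv. merge_sums.
lra.
Qed.

Lemma cocoercive a y :
  mu * L * nsq (vsub y a) + nsq (vsub (G y) (G a))
  <= (mu + L) * inner (vsub (G y) (G a)) (vsub y a).
Proof.
set N := nsq (vsub y a); set Q := nsq (vsub (G y) (G a)).
set I := inner (vsub (G y) (G a)) (vsub y a).
set A := I - mu * N.
set B := nsq (vv a y).
have hB : 0 <= B by exact: nsq_ge0.
have hN : 0 <= N by exact: nsq_ge0.
have eB : B = Q - 2 * mu * I + mu ^ 2 * N.
  rewrite /B /Q /I /N /vv; merge_sums.
have key : forall s, 0 < s -> (2 * s - (L - mu) * s ^ 2) * B <= A.
  move=> s hs.
  have h1 := cc_half a y s; have h2 := cc_half y a s.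
  have e1 : nsq (vv y a) = nsq (vv a y) by rewrite /vv; merge_sums.
  have e2 : inner (G y) (vsub a y) = - inner (G y) (vsub y a) by merge_sums.
  have e3 : nsq (vsub a y) = N by rewrite /N; merge_sums.
  have e4 : I = inner (G y) (vsub y a) - inner (G a) (vsub y a) by rewrite /I; merge_sums.
  rewrite e1 e2 e3 in h2; rewrite -/N -/B in h1; rewrite -/B in h2.
  rewrite /A e4; lra.
have hA : A <= (L - mu) * N.
  have h1 := CS (vsub (G y) (G a)) (vsub y a).
  have h2 := lip y a.
  have h3 := vnorm_sq (vsub y a).
  have h4 := vnorm_ge0 (vsub y a).
  have h5 := vnorm_ge0 (vsub (G y) (G a)).
  rewrite -/I in h1; rewrite -/N in h3; rewrite /A.
  nra.
have goal : B <= (L - mu) * A.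
  case: (Rlt_le_dec 0 (L - mu)) => hLm.
    have := key (/ (L - mu)) (Rinv_0_lt_compat _ hLm).
    have e : 2 * / (L - mu) - (L - mu) * (/ (L - mu)) ^ 2 = / (L - mu) by field; lra.
    rewrite e => h.
    have := Rmult_le_compat_l (L - mu) _ _ (Rlt_le _ _ hLm) h.
    have e' : (L - mu) * (/ (L - mu) * B) = B by field; lra.
    lra.
  have hA0 : 0 <= A.
    have := key 1 Rlt_0_1; nra.
  have hA1 : A = 0 by nra.
  have hB0 : B = 0.
    have := key 1 Rlt_0_1; rewrite hA1; nra.
  rewrite hA1 hB0; lra.
rewrite /A eB in goal.
lra.
Qed.

Lemma contraction alpha x y :
  0 < alpha -> alpha <= 2 / (mu + L) ->
  nsq (vsub (vsub x (vscale alpha (G x))) (vsub y (vscale alpha (G y))))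
  <= (1 - 2 * alpha * mu * L / (mu + L)) * nsq (vsub x y).
Proof.
move=> ha hal.
have h := cocoercive y x.
set N := nsq (vsub x y) in h *; set Q := nsq (vsub (G x) (G y)) in h *.
set I := inner (vsub (G x) (G y)) (vsub x y) in h *.
have e : nsq (vsub (vsub x (vscale alpha (G x))) (vsub y (vscale alpha (G y))))
   = N - 2 * alpha * I + alpha ^ 2 * Q.
  rewrite /N /I /Q; merge_sums.
rewrite e.
have hQ : 0 <= Q by exact: nsq_ge0.
have hc : 0 < mu + L by lra.
have hal' : alpha * (mu + L) <= 2.
  have := Rmult_le_compat_r (mu + L) _ _ (Rlt_le _ _ hc) hal.
  have e' : 2 / (mu + L) * (mu + L) = 2 by field; lra.
  lra.
apply: (Rmult_le_reg_r (mu + L)) => //.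
have e2 : (1 - 2 * alpha * mu * L / (mu + L)) * N * (mu + L) = (mu + L) * N - 2 * alpha * mu * L * N
  by field; lra.
rewrite e2.
have h2 := Rmult_le_compat_l (2 * alpha) _ _ ltac:(lra) h.
have h3 : alpha * Q * (alpha * (mu + L) - 2) <= 0.
  have : 0 <= alpha * Q by apply: Rmult_le_pos; lra.
  nra.
nra.
Qed.

End CC.

Definition appM n (B : 'I_n -> 'I_n -> R) (v : vec n) : vec n :=
  fun i => \big[Rplus/0]_(l < n) (B i l * v l).

Section Op.
Variable n : nat.
Implicit Types (B : 'I_n -> 'I_n -> R) (v w : vec n).

Lemma appM_add B v w : appM B (vadd v w) = vadd (appM B v) (appM B w).
Proof. apply: functional_extensionality => i; rewrite /appM /vadd bigR_add; apply: eq_bigr => l _; ring. Qed.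
Lemma appM_sub B v w : appM B (vsub v w) = vsub (appM B v) (appM B w).
Proof. apply: functional_extensionality => i; rewrite /appM /vsub bigR_sub; apply: eq_bigr => l _; ring. Qed.
Lemma appM_scale B a v : appM B (vscale a v) = vscale a (appM B v).
Proof. apply: functional_extensionality => i; rewrite /appM /vscale bigR_mull; apply: eq_bigr => l _; ring. Qed.

Lemma bigR_mulr (I : Type) (r : seq I) (P : pred I) (F : I -> R) c :
  (\big[Rplus/0]_(i <- r | P i) F i) * c = \big[Rplus/0]_(i <- r | P i) (F i * c).
Proof. rewrite Rmult_comm bigR_mull; apply: eq_bigr => i _; ring. Qed.

Lemma appM_sym B : (forall i j, B i j = B j i) ->
  forall v w, inner (appM B v) w = inner v (appM B w).
Proof.
move=> hs v w; rewrite /inner /appM.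
under eq_bigr do rewrite bigR_mulr.
under [RHS]eq_bigr do rewrite bigR_mull.
rewrite exchange_big; apply: eq_bigr => i _; apply: eq_bigr => l _.
rewrite hs; ring.
Qed.

Lemma nsq_zero_app B z : nsq z = 0 -> nsq (appM B z) = 0.
Proof.
move=> h; have hz := nsq_eq0 h.
rewrite /nsq /inner big1 // => i _.
rewrite /appM big1; first ring.
by move=> l _; rewrite hz; ring.
Qed.

Lemma nsq_pos_coord v : nsq v <> 0 -> exists i, v i <> 0.
Proof.
move=> h; apply: NNPP => hn; apply: h.
rewrite /nsq /inner big1 // => i _.
have : v i = 0 by apply: NNPP => hi; apply: hn; exists i.
by move=> ->; ring.
Qed.

Hypothesis rayleigh : (0 < n)%N -> forall B : 'I_n -> 'I_n -> R,
  exists v : vec n, nsq v = 1 /\ forall w, nsq w = 1 -> nsq (appM B w) <= nsq (appM B v).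

Lemma opnorm_bound (hn : (0 < n)%N) B (hsym : forall i j, B i j = B j i) rho (hrho : 0 <= rho)
  (heig : forall lam v, (exists i, v i <> 0) -> (forall i, appM B v i = lam * v i) -> Rabs lam <= rho) :
  forall z, nsq (appM B z) <= rho ^ 2 * nsq z.
Proof.
have [c [hc1 hcmax]] := rayleigh hn B.
set M := nsq (appM B c).
have hM : 0 <= M by exact: nsq_ge0.
have claim1 : forall z, nsq (appM B z) <= M * nsq z.
  move=> z; case: (Req_dec (nsq z) 0) => hz.
    rewrite nsq_zero_app // hz; lra.
  have hz' : 0 < nsq z by have := nsq_ge0 z; lra.
  set k := / sqrt (nsq z).
  have hk2 : k ^ 2 * nsq z = 1.
    rewrite /k -Rinv_pow; last by apply: Rgt_not_eq; apply: sqrt_lt_R0.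
    rewrite pow2_sqrt; [field; exact hz | lra].
  have := hcmax (vscale k z); rewrite appM_scale !nsq_scale => h.
  have := h hk2 => h'.
  have e : nsq (appM B z) = k ^ 2 * nsq (appM B z) * nsq z.
    by rewrite Rmult_assoc (Rmult_comm (nsq (appM B z))) -Rmult_assoc hk2; ring.
  rewrite e; apply: Rmult_le_compat_r; [lra | exact h'].
set w := vsub (appM B (appM B c)) (vscale M c).
have claim2 : forall j, w j = 0.
  apply: nsq_eq0.
  have hs : forall s, 2 * s * nsq w + s ^ 2 * (nsq (appM B w) - M * nsq w) <= 0.
    move=> s; have := claim1 (vadd c (vscale s w)).
    rewrite appM_add appM_scale nsq_add nsq_scale nsq_add nsq_scale hc1 !inner_scaler.
    rewrite -/M -(appM_sym hsym (appM B c) w).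
    have e : nsq w = inner (appM B (appM B c)) w - M * inner c w.
      by rewrite /nsq {1}/w inner_subl inner_scalel.
    rewrite e; lra.
  set X := nsq w in hs *; set K := nsq (appM B w) - M * X in hs.
  have hX : 0 <= X by exact: nsq_ge0.
  case: (Req_dec X 0) => // hX0.
  exfalso.
  have hK := Rle_abs K; have hK' := Rabs_pos K.
  set s := X / (Rabs K + 1).
  have hsp : 0 < s by apply: Rdiv_lt_0_compat; lra.
  have := hs s.
  have e : s * (Rabs K + 1) = X by rewrite /s; field; lra.
  have h1 : s ^ 2 * K >= - (s ^ 2 * Rabs K).
    have := Rle_abs (-K); rewrite Rabs_Ropp; nra.
  nra.
have hBBc : forall i, appM B (appM B c) i = M * c i.
  move=> i; have := claim2 i; rewrite /w /vsub /vscale; lra.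
set r := sqrt M.
have hr : 0 <= r by exact: sqrt_pos.
have hr2 : r * r = M by rewrite /r sqrt_sqrt.
set u := vadd (appM B c) (vscale r c).
have hu : forall i, appM B u i = r * u i.
  move=> i; rewrite /u appM_add appM_scale /vadd /vscale hBBc -hr2; ring.
have hrr : r <= rho.
  case: (classic (exists i, u i <> 0)) => hex.
    have := heig r u hex hu; rewrite Rabs_right; lra.
  have hu0 : forall i, u i = 0.
    by move=> i; apply: NNPP => hi; apply: hex; exists i.
  have hc : exists i, c i <> 0 by apply: nsq_pos_coord; lra.
  have := heig (- r) c hc.
  rewrite Rabs_Ropp Rabs_right; last lra.
  apply => i; have := hu0 i; rewrite /u /vadd /vscale; lra.
move=> z; apply: Rle_trans (claim1 z) _.
apply: Rmult_le_compat_r; first exact: nsq_ge0.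
rewrite -hr2; simpl; nra.
Qed.

End Op.

Definition meanv n (v : vec n) := / INR n * \big[Rplus/0]_(i < n) v i.
Definition dev n (v : vec n) : vec n := fun i => v i - meanv v.
Definition Wt n (W : 'I_n -> 'I_n -> R) t (v : vec n) := iter t (appM W) v.
Definition col n p (y : svec n p) (j : 'I_p) : vec n := fun i => y i j.

Section WMix.
Variable n : nat.
Hypothesis hn : (0 < n)%N.
Variable W : 'I_n -> 'I_n -> R.
Hypothesis hWsym : forall i j, W i j = W j i.
Hypothesis hWstoch : forall i, \big[Rplus/0]_(j < n) W i j = 1.
Hypothesis hW1simple : forall v : 'I_n -> R,
      (forall i, \big[Rplus/0]_(l < n) (W i l * v l) = v i) -> forall i j, v i = v j.
Variable beta : R.
Hypothesis hbeta_max : forall lam, is_eigenvalue W lam -> lam <> 1 -> Rabs lam <= beta.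
Hypothesis hbeta : 0 < beta < 1.
Hypothesis rayleigh : forall m, (0 < m)%N -> forall B : 'I_m -> 'I_m -> R,
  exists v : vec m, nsq v = 1 /\ forall w, nsq w = 1 -> nsq (appM B w) <= nsq (appM B v).

Lemma INR_n_pos : 0 < INR n.
Proof. apply: lt_0_INR; apply/ltP; exact: hn. Qed.

Lemma colsum l : \big[Rplus/0]_(i < n) W i l = 1.
Proof. rewrite -(hWstoch l); apply: eq_bigr => i _; exact: hWsym. Qed.

Lemma sum_appM (v : vec n) : \big[Rplus/0]_(i < n) appM W v i = \big[Rplus/0]_(i < n) v i.
Proof.
rewrite /appM exchange_big; apply: eq_bigr => l _.
rewrite -sumO_mulr colsum; ring.
Qed.

Lemma mean_appM (v : vec n) : meanv (appM W v) = meanv v.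
Proof. by rewrite /meanv sum_appM. Qed.

Lemma sum_dev (v : vec n) : \big[Rplus/0]_(i < n) dev v i = 0.
Proof.
rewrite /dev -sumO_sub bigR_const /meanv.
have := INR_n_pos; move=> h.
change (\big[Rplus/0]_(i < n) v i - INR n * (/ INR n * \big[Rplus/0]_(i < n) v i) = 0).
field; lra.
Qed.

Lemma dev_appM (v : vec n) : dev (appM W v) = appM W (dev v).
Proof.
apply: functional_extensionality => i.
rewrite /dev mean_appM /appM.
have e : \big[Rplus/0]_(l < n) (W i l * (v l - meanv v))
   = \big[Rplus/0]_(l < n) (W i l * v l) - meanv v * \big[Rplus/0]_(l < n) W i l.
  rewrite sumO_mull sumO_sub; apply: eq_bigr => l _; ring.
by rewrite e hWstoch; ring.
Qed.

Lemma pythag (v : vec n) : nsq v = nsq (dev v) + INR n * meanv v ^ 2.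
Proof.
have hd := sum_dev v.
have e : nsq v = \big[Rplus/0]_(i < n) (dev v i * dev v i + 2 * meanv v * dev v i + meanv v ^ 2).
  by apply: eq_bigr => i _; rewrite /dev; ring.
rewrite e -!sumO_add -sumO_mull hd bigR_const /nsq /inner; ring.
Qed.

Definition Bm : 'I_n -> 'I_n -> R := fun i l => W i l - / INR n.

Lemma Bm_eig lam v : (exists i, v i <> 0) -> (forall i, appM Bm v i = lam * v i) ->
  Rabs lam <= beta.
Proof.
move=> [i0 hi0] hv.
have hnp := INR_n_pos.
have hsumB : \big[Rplus/0]_(i < n) appM Bm v i = 0.
  rewrite /appM exchange_big big1 // => l _.
  rewrite -sumO_mulr.
  have -> : \big[Rplus/0]_(i < n) Bm i l = 0.
    rewrite /Bm -sumO_sub colsum bigR_const; field; lra.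
  ring.
have hlam : lam * \big[Rplus/0]_(i < n) v i = 0.
  transitivity (\big[Rplus/0]_(i < n) appM Bm v i); last exact hsumB.
  rewrite sumO_mull; apply: eq_bigr => i _; by rewrite hv.
case: (Req_dec lam 0) => hl0.
  rewrite hl0 Rabs_R0; lra.
have hs : \big[Rplus/0]_(i < n) v i = 0.
  case: (Rmult_integral _ _ hlam) => //.
have hW : forall i, \big[Rplus/0]_(l < n) (W i l * v l) = lam * v i.
  move=> i; rewrite -hv /appM /Bm.
  have e : \big[Rplus/0]_(l < n) ((W i l - / INR n) * v l)
    = \big[Rplus/0]_(l < n) (W i l * v l) - / INR n * \big[Rplus/0]_(l < n) v l.
    rewrite sumO_mull sumO_sub; apply: eq_bigr => l _; ring.
  by rewrite e hs; ring.
apply: hbeta_max.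
  exists v; split; [by exists i0 | exact hW].
move=> h1; subst lam.
have hc : forall i j, v i = v j.
  apply: hW1simple => i; rewrite hW; ring.
apply: hi0.
have : \big[Rplus/0]_(i < n) v i = INR n * v i0.
  rewrite -bigR_const; apply: eq_bigr => i _; exact: hc.
rewrite hs => h0.
have := Rmult_integral _ _ (esym h0); case => //; lra.
Qed.

Lemma W_contr_dev d : \big[Rplus/0]_(i < n) d i = 0 -> nsq (appM W d) <= beta ^ 2 * nsq d.
Proof.
move=> hd.
have e : appM W d = appM Bm d.
  apply: functional_extensionality => i; rewrite /appM /Bm.
  have e : \big[Rplus/0]_(l < n) ((W i l - / INR n) * d l)
    = \big[Rplus/0]_(l < n) (W i l * d l) - / INR n * \big[Rplus/0]_(l < n) d l.
    rewrite sumO_mull sumO_sub; apply: eq_bigr => l _; ring.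
  by rewrite e hd; ring.
rewrite e; apply: (opnorm_bound (rayleigh (m:=n)) hn).
- by move=> i j; rewrite /Bm hWsym.
- lra.
- exact: Bm_eig.
Qed.

Lemma Wt_S t v : Wt W t.+1 v = appM W (Wt W t v).
Proof. by []. Qed.

Lemma mean_Wt t v : meanv (Wt W t v) = meanv v.
Proof. elim: t => [//|t IH]; by rewrite Wt_S mean_appM. Qed.

Lemma dev_Wt t v : dev (Wt W t v) = Wt W t (dev v).
Proof. elim: t => [//|t IH]; by rewrite !Wt_S dev_appM IH. Qed.

Lemma sum_Wt t v : \big[Rplus/0]_(i < n) Wt W t v i = \big[Rplus/0]_(i < n) v i.
Proof. elim: t => [//|t IH]; by rewrite Wt_S sum_appM. Qed.

Lemma Wt_contr_dev t d : \big[Rplus/0]_(i < n) d i = 0 ->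
  nsq (Wt W t d) <= beta ^ (2 * t) * nsq d.
Proof.
move=> hd; elim: t => [|t IH]; first by rewrite /= Rmult_1_l; lra.
rewrite Wt_S.
have h := @W_contr_dev (Wt W t d) ltac:(by rewrite sum_Wt).
have hb : 0 <= beta ^ 2 by apply: pow_le; lra.
have e : beta ^ (2 * t.+1) = beta ^ 2 * beta ^ (2 * t).
  by rewrite mulnS; exact: pow_add.
rewrite e Rmult_assoc.
apply: Rle_trans h _; apply: Rmult_le_compat_l => //.
Qed.

Lemma dev_Wt_bound t v : nsq (dev (Wt W t v)) <= beta ^ (2 * t) * nsq v.
Proof.
rewrite dev_Wt.
apply: Rle_trans (Wt_contr_dev t (sum_dev v)) _.
apply: Rmult_le_compat_l; first by apply: pow_le; lra.
rewrite (pythag v); have := INR_n_pos; have := pow2_ge_0 (meanv v); nra.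
Qed.

Lemma Wt_nonexp t v : nsq (Wt W t v) <= nsq v.
Proof.
rewrite (pythag (Wt W t v)) (pythag v) mean_Wt dev_Wt.
have h := Wt_contr_dev t (sum_dev v).
have hb : beta ^ (2 * t) <= 1.
  rewrite -(pow1 (2 * t)); apply: pow_incr; lra.
have := nsq_ge0 (dev v); nra.
Qed.

Lemma Wt_sub t v w : Wt W t (vsub v w) = vsub (Wt W t v) (Wt W t w).
Proof. elim: t => [//|t IH]; by rewrite !Wt_S IH appM_sub. Qed.

Lemma col_iter p t (y : svec n p) j : col (iter t (mixZ W) y) j = Wt W t (col y j).
Proof.
elim: t => [//|t IH].
apply: functional_extensionality => i.
by rewrite Wt_S -IH.
Qed.

Lemma ssq_cols p (y : svec n p) : ssq y = \big[Rplus/0]_(j < p) nsq (col y j).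
Proof. by rewrite /ssq /sinner /nsq /inner exchange_big. Qed.

Lemma stack_nonexp p t (y : svec n p) : ssq (iter t (mixZ W) y) <= ssq y.
Proof.
rewrite !ssq_cols; apply: bigR_le => j _; rewrite col_iter; exact: Wt_nonexp.
Qed.

Lemma avg_iter p t (y : svec n p) : avg (iter t (mixZ W) y) = avg y.
Proof.
apply: functional_extensionality => j.
have := mean_Wt t (col y j); rewrite -col_iter.
by rewrite /meanv /col /avg.
Qed.

Lemma stack_dev p t (y : svec n p) :
  let x := iter t (mixZ W) y in
  \big[Rplus/0]_(i < n) nsq (vsub (x i) (avg x)) <= beta ^ (2 * t) * ssq y.
Proof.
move=> x.
have e : \big[Rplus/0]_(i < n) nsq (vsub (x i) (avg x))
   = \big[Rplus/0]_(j < p) nsq (dev (col x j)).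
  by rewrite /nsq /inner exchange_big.
rewrite e ssq_cols sumO_mull; apply: bigR_le => j _.
rewrite /x col_iter; exact: dev_Wt_bound.
Qed.

Lemma iter_ssub p t (y z : svec n p) :
  iter t (mixZ W) (ssub y z) = ssub (iter t (mixZ W) y) (iter t (mixZ W) z).
Proof.
apply: functional_extensionality => i; apply: functional_extensionality => j.
change (col (iter t (mixZ W) (ssub y z)) j i =
  col (iter t (mixZ W) y) j i - col (iter t (mixZ W) z) j i).
rewrite !col_iter.
have -> : col (ssub y z) j = vsub (col y j) (col z j) by [].
by rewrite Wt_sub.
Qed.

End WMix.

Lemma Lmax_ge n (Ls : 'I_n -> R) i : Ls i <= Lmax Ls.
Proof.
rewrite /Lmax.
have gen : forall r : seq 'I_n, i \in r -> Ls i <= \big[Rmax/0]_(j <- r) Ls j.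
  elim => [//|a r IH]; rewrite in_cons big_cons => /orP [/eqP -> | h].
    exact: Rmax_l.
  apply: Rle_trans (IH h) _; exact: Rmax_r.
apply: gen; exact: mem_index_enum.
Qed.

Definition vsum n p (F : 'I_n -> vec p) : vec p := fun j => \big[Rplus/0]_(i < n) F i j.

Lemma vnorm_vsum n p (F : 'I_n -> vec p) :
  vnorm (vsum F) <= \big[Rplus/0]_(i < n) vnorm (F i).
Proof.
rewrite /vsum.
have gen : forall r : seq 'I_n,
  vnorm (fun j => \big[Rplus/0]_(i <- r) F i j) <= \big[Rplus/0]_(i <- r) vnorm (F i).
  elim => [|a r IH].
    rewrite big_nil.
    have -> : (fun j => \big[Rplus/0]_(i <- [::]) F i j) = (fun _ => 0).
      by apply: functional_extensionality => j; rewrite big_nil.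
    rewrite /vnorm /inner big1; first by rewrite sqrt_0; lra.
    move=> j _; ring.
  rewrite big_cons.
  have -> : (fun j => \big[Rplus/0]_(i <- a :: r) F i j)
      = vadd (F a) (fun j => \big[Rplus/0]_(i <- r) F i j).
    by apply: functional_extensionality => j; rewrite big_cons.
  apply: Rle_trans (vnorm_add _ _) _.
  change (vnorm (F a) + vnorm (fun j => \big[Rplus/0]_(i <- r) F i j)
     <= vnorm (F a) + \big[Rplus/0]_(i <- r) vnorm (F i)).
  lra.
exact: gen.
Qed.

Lemma vnorm_sub_comm p (u v : vec p) : vnorm (vsub u v) = vnorm (vsub v u).
Proof.
rewrite /vnorm; f_equal; apply: eq_bigr => j _; rewrite /vsub; ring.
Qed.

Lemma snorm_sub n p (x y : svec n p) : snorm (ssub x y) <= snorm x + snorm y.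
Proof.
have e : ssub x y = sadd x (sscale (-1) y).
  apply: functional_extensionality => i; apply: functional_extensionality => j.
  rewrite /ssub /sadd /sscale /vsub /vadd /vscale; ring.
rewrite e; apply: Rle_trans (snorm_add _ _) _.
have -> : snorm (sscale (-1) y) = snorm y.
  rewrite /snorm; f_equal; apply: eq_bigr => i _; apply: eq_bigr => j _.
  rewrite /sscale /vscale; ring.
lra.
Qed.

Lemma mu_le_L p (hp : (0 < p)%N) (f : vec p -> R) g mu L :
  strongly_convex mu f g -> lipschitz_grad L g -> mu <= L.
Proof.
move=> hsc hl.
pose x : vec p := fun _ => 0.
pose y : vec p := fun j => if j == Ordinal hp then 1 else 0.
have h1 := hsc x y; have h2 := hsc y x.
rewrite vnorm_sub_comm in h2.
have hN : vnorm (vsub y x) = 1.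
  rewrite /vnorm /inner (bigD1 (Ordinal hp)) //= big1.
    rewrite /vsub /y /x eqxx; rewrite Rplus_0_r Rminus_0_r Rmult_1_l; exact: sqrt_1.
  by move=> j /negbTE hj; rewrite /vsub /y /x hj; ring.
have e : inner (g y) (vsub x y) = - inner (g y) (vsub y x).
  rewrite /inner sumO_opp; apply: eq_bigr => j _; rewrite /vsub; ring.
have hI := CS (vsub (g y) (g x)) (vsub y x).
have hl' := hl y x.
rewrite inner_subl in hI.
rewrite hN in h1 h2 hI hl'.
have := vnorm_ge0 (vsub (g y) (g x)).
nra.
Qed.

Lemma avg_le n (a b : 'I_n -> R) : (forall i, a i <= b i) ->
  / INR n * \big[Rplus/0]_(i < n) a i <= / INR n * \big[Rplus/0]_(i < n) b i.
Proof.
move=> h; apply: Rmult_le_compat_l.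
  case: n a b h => [|n] a b h; first by rewrite /= Rinv_0; lra.
  apply: Rlt_le; apply: Rinv_0_lt_compat; apply: lt_0_INR; lia.
exact: bigR_le => i _; exact: h.
Qed.

Definition Gbar n p (g : 'I_n -> vec p -> vec p) (z : vec p) : vec p :=
  fun j => / INR n * \big[Rplus/0]_(i < n) g i z j.
Definition Fbar n p (f : 'I_n -> vec p -> R) (z : vec p) : R :=
  / INR n * \big[Rplus/0]_(i < n) f i z.

Ltac msum :=
  rewrite /Rdiv /Rminus;
  repeat first [rewrite sumO_mull | rewrite sumO_mulr | rewrite sumO_opp
               | rewrite sumO_add ];
  apply: eq_bigr => i _; ring.

Section Avg.
Variables n p : nat.
Hypothesis hn : (0 < n)%N.
Variables (f : 'I_n -> vec p -> R) (g : 'I_n -> vec p -> vec p) (mu Ls : 'I_n -> R).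

Lemma avg3 (a b c : 'I_n -> R) K :
  / INR n * \big[Rplus/0]_(i < n) (a i + b i + c i / 2 * K)
  = / INR n * \big[Rplus/0]_(i < n) a i + / INR n * \big[Rplus/0]_(i < n) b i
    + (/ INR n * \big[Rplus/0]_(i < n) c i) / 2 * K.
Proof.
rewrite /Rdiv /Rminus; repeat first [rewrite sumO_mull | rewrite sumO_mulr | rewrite sumO_opp | rewrite sumO_add ].
apply: eq_bigr => i _; ring.
Qed.

Lemma inner_Gbar z d : inner (Gbar g z) d = / INR n * \big[Rplus/0]_(i < n) inner (g i z) d.
Proof.
rewrite /inner /Gbar sumO_mull.
under [RHS]eq_bigr do rewrite sumO_mull.
rewrite exchange_big; apply: eq_bigr => j _.
rewrite sumO_mull sumO_mulr; apply: eq_bigr => i _; ring.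
Qed.

Lemma Fbar_sc : (forall i, strongly_convex (mu i) (f i) (g i)) ->
  forall x y, Fbar f x + inner (Gbar g x) (vsub y x) + fbar_const mu / 2 * nsq (vsub y x)
    <= Fbar f y.
Proof.
move=> hsc x y.
have h : forall i, f i x + inner (g i x) (vsub y x) + mu i / 2 * nsq (vsub y x) <= f i y.
  move=> i; have := hsc i x y; rewrite vnorm_sq; lra.
have := avg_le h.
have e : / INR n * \big[Rplus/0]_(i < n) (f i x + inner (g i x) (vsub y x) + mu i / 2 * nsq (vsub y x))
  = Fbar f x + inner (Gbar g x) (vsub y x) + fbar_const mu / 2 * nsq (vsub y x).
  rewrite inner_Gbar; exact: avg3.
rewrite e /Fbar; lra.
Qed.

Lemma Fbar_dl : (forall i, is_gradient (f i) (g i)) -> (forall i, lipschitz_grad (Ls i) (g i)) ->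
  (forall i, 0 < Ls i) ->
  forall x y, Fbar f y <= Fbar f x + inner (Gbar g x) (vsub y x) + fbar_const Ls / 2 * nsq (vsub y x).
Proof.
move=> hg hl hL x y.
have h : forall i, f i y <= f i x + inner (g i x) (vsub y x) + Ls i / 2 * nsq (vsub y x).
  move=> i; apply: descent; [exact: hg | exact: hl | exact: Rlt_le (hL i)].
have := avg_le h.
have e : / INR n * \big[Rplus/0]_(i < n) (f i x + inner (g i x) (vsub y x) + Ls i / 2 * nsq (vsub y x))
  = Fbar f x + inner (Gbar g x) (vsub y x) + fbar_const Ls / 2 * nsq (vsub y x).
  rewrite inner_Gbar; exact: avg3.
rewrite e /Fbar; lra.
Qed.

Lemma Gbar_lip : (forall i, lipschitz_grad (Ls i) (g i)) -> lipschitz_grad (fbar_const Ls) (Gbar g).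
Proof.
move=> hl x y.
have e : vsub (Gbar g x) (Gbar g y) = vscale (/ INR n) (vsum (fun i => vsub (g i x) (g i y))).
  apply: functional_extensionality => j; rewrite /vsub /Gbar /vscale /vsum; msum.
have hnp : 0 < INR n by apply: lt_0_INR; apply/ltP.
rewrite e vnorm_scale Rabs_right; last by apply: Rle_ge; apply: Rlt_le; apply: Rinv_0_lt_compat.
apply: Rle_trans (Rmult_le_compat_l _ _ _ _ (vnorm_vsum _)) _.
  by apply: Rlt_le; apply: Rinv_0_lt_compat.
rewrite /fbar_const Rmult_assoc sumO_mulr.
apply: Rmult_le_compat_l; first by apply: Rlt_le; apply: Rinv_0_lt_compat.
apply: bigR_le => i _; exact: hl.
Qed.

Lemma Gbar_min_zero : (forall i, is_gradient (f i) (g i)) ->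
  forall xs, (forall z, \big[Rplus/0]_(i < n) f i xs <= \big[Rplus/0]_(i < n) f i z) ->
  forall j, Gbar g xs j = 0.
Proof.
move=> hg xs hx.
set d := vsum (fun i => g i xs).
have hd : forall j, d j = 0.
  apply: nsq_eq0.
  have H := @dpl_big n (fun i s => f i (vadd xs (vscale s d))) (fun i => inner (g i xs) d) 0
     (fun i => hg i xs d).
  have := deriv_minimum (fun s => \big[Rplus/0]_(i < n) f i (vadd xs (vscale s d))) (-1) 1 0 (exist _ _ H).
  move=> /= h.
  have e : nsq d = \big[Rplus/0]_(i < n) inner (g i xs) d.
    rewrite /nsq {1}/d /vsum /inner.
    under eq_bigr do rewrite sumO_mulr.
    by rewrite exchange_big.
  rewrite e; apply: h; try lra.
  by move=> z _ _; rewrite vadd_scale0.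
move=> j; rewrite /Gbar.
have := hd j; rewrite /d /vsum => ->; ring.
Qed.

End Avg.

Lemma young c x y : 0 < c -> 2 * x * y <= c * x ^ 2 + / c * y ^ 2.
Proof.
move=> hc.
have h : 0 <= (c * x - y) ^ 2 by apply: pow2_ge_0.
have e : c * x ^ 2 + / c * y ^ 2 - 2 * x * y = / c * (c * x - y) ^ 2 by field; lra.
have : 0 <= / c * (c * x - y) ^ 2.
  apply: Rmult_le_pos => //; apply: Rlt_le; exact: Rinv_0_lt_compat.
lra.
Qed.

Lemma pow_2t b t : b ^ (2 * t) = (b ^ t) ^ 2.
Proof.
elim: t => [|t IH]; first by rewrite /=; ring.
rewrite mulnS pow_add IH /=; ring.
Qed.

Lemma sum_pos n (hn : (0 < n)%N) (F : 'I_n -> R) : (forall i, 0 < F i) ->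
  0 < \big[Rplus/0]_(i < n) F i.
Proof.
move=> h; apply: Rlt_le_trans (h (Ordinal hn)) _.
apply: bigR_term_le => j; exact: Rlt_le.
Qed.

Lemma fbar_pos n (hn : (0 < n)%N) (F : 'I_n -> R) : (forall i, 0 < F i) -> 0 < fbar_const F.
Proof.
move=> h; apply: Rmult_lt_0_compat; last exact: sum_pos.
apply: Rinv_0_lt_compat; apply: lt_0_INR; apply/ltP; exact: hn.
Qed.

Lemma nsq_empty p (hp : (p <= 0)%N) (v : vec p) : nsq v = 0.
Proof.
rewrite /nsq /inner big1 // => j _.
by case: j => m hm; exfalso; move: (leq_trans hm hp).
Qed.

Lemma rayleigh_all : forall m, (0 < m)%N -> forall B : 'I_m -> 'I_m -> R,
  exists v : vec m, nsq v = 1 /\ forall w, nsq w = 1 -> nsq (appM B w) <= nsq (appM B v).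
Proof.
move=> m hm B; have [v [hv hmax]] := Br.rayleigh_R hm B.
exists v; split; first exact: hv.
move=> w hw; exact: hmax.
Qed.

Theorem theorem2
  (n p : nat) (hn : (0 < n)%N)
  (W : 'I_n -> 'I_n -> R)
  (hWsym : forall i j, W i j = W j i)
  (hWnn : forall i j, 0 <= W i j)
  (hWdiag : forall i, 0 < W i i)
  (hWstoch : forall i, \big[Rplus/0]_(j < n) W i j = 1)
  (hW1simple : forall v : 'I_n -> R,
      (forall i, \big[Rplus/0]_(l < n) (W i l * v l) = v i) -> forall i j, v i = v j)
  (hWspec : forall lam, is_eigenvalue W lam -> lam <> 1 -> -1 < lam < 1)
  (beta : R)
  (hbeta_max : forall lam, is_eigenvalue W lam -> lam <> 1 -> Rabs lam <= beta)
  (hbeta_att : exists lam, is_eigenvalue W lam /\ lam <> 1 /\ Rabs lam = beta)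
  (hbeta : 0 < beta < 1)
  (t : nat) (ht : (1 <= t)%N)
  (f : 'I_n -> vec p -> R) (g : 'I_n -> vec p -> vec p)
  (mu Ls : 'I_n -> R)
  (hgrad : forall i, is_gradient (f i) (g i))
  (hmu : forall i, 0 < mu i)
  (hL : forall i, 0 < Ls i)
  (hsc : forall i, strongly_convex (mu i) (f i) (g i))
  (hlip : forall i, lipschitz_grad (Ls i) (g i))
  (u : svec n p) (hu : forall i z, f i (u i) <= f i z)
  (xstar : vec p)
  (hxstar : forall z, \big[Rplus/0]_(i < n) f i xstar <= \big[Rplus/0]_(i < n) f i z)
  (gamma : R)
  (hgamma_min : forall i, gamma <= mu i * Ls i / (mu i + Ls i))
  (hgamma_att : exists i, gamma = mu i * Ls i / (mu i + Ls i))
  (s0 : vec p) (alpha : R)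
  (halpha : 0 < alpha)
  (halpha1 : alpha <= / Lmax Ls)
  (halpha2 : alpha <= c4_const (fbar_const mu) (fbar_const Ls)) :
  let L := Lmax Ls in
  let c2 := c2_const (fbar_const mu) (fbar_const Ls) in
  let nu := 2 * alpha * gamma in
  let y0 : svec n p := fun _ => s0 in
  let D := snorm (ssub y0 u) + (nu + 4) / nu * snorm u in
  let xbar := fun k => avg (near_x W t alpha g y0 k) in
  let c1sq := fun delta => 1 - alpha * c2 + alpha * delta - alpha ^ 2 * delta * c2 in
  let c3sq := fun delta => alpha * (alpha + / delta) * D ^ 2 * L ^ 2 in
  (forall delta, 0 < delta -> forall k : nat,
     (vnorm (vsub (xbar (S k)) xstar)) ^ 2
       <= c1sq delta * (vnorm (vsub (xbar k) xstar)) ^ 2 + c3sq delta * beta ^ (2 * t))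
  /\
  (alpha * c2 < 1 ->
     let delta := c2 / (2 * (1 - alpha * c2)) in
     let c1 := sqrt (1 - alpha * c2 / 2) in
     c1sq delta = c1 ^ 2 /\ 0 < c1 < 1 /\
     forall k : nat,
       vnorm (vsub (xbar k) xstar)
         <= c1 ^ k * vnorm (vsub (xbar 0%nat) xstar)
            + L * D * beta ^ t / c2 * sqrt (2 * (2 - alpha * c2))).
Proof.
have rayleigh := rayleigh_all.
move=> L c2 nu y0 D xbar c1sq c3sq.
rewrite -/L in halpha1.
set i0 := Ordinal hn.
have hLi : forall i, Ls i <= L := fun i => Lmax_ge Ls i.
have hLpos : 0 < L := Rlt_le_trans _ _ _ (hL i0) (hLi i0).
have hnp : 0 < INR n by apply: lt_0_INR; apply/ltP.
have hmub : 0 < fbar_const mu := fbar_pos hn hmu.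
have hLb : 0 < fbar_const Ls := fbar_pos hn hL.
have hc2 : 0 < c2.
  rewrite /c2 /c2_const; apply: Rdiv_lt_0_compat; last lra.
  apply: Rmult_lt_0_compat => //; lra.
have haL : alpha * L <= 1.
  have := Rmult_le_compat_r L _ _ (Rlt_le _ _ hLpos) halpha1.
  rewrite Rinv_l; [lra | apply: Rgt_not_eq; lra].
have hgam_le : forall i, mu i * Ls i / (mu i + Ls i) <= Ls i.
  move=> i; have := hmu i; have := hL i => h1 h2.
  have e : mu i * Ls i / (mu i + Ls i) = Ls i - Ls i ^ 2 / (mu i + Ls i) by field; lra.
  rewrite e; have : 0 <= Ls i ^ 2 / (mu i + Ls i).
    apply: Rmult_le_pos; [apply: pow2_ge_0 | apply: Rlt_le; apply: Rinv_0_lt_compat; lra].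
  lra.
have hgam : 0 < gamma.
  have [i ->] := hgamma_att; apply: Rdiv_lt_0_compat.
    exact: Rmult_lt_0_compat.
  have := hmu i; have := hL i; lra.
have hnu : 0 < nu by rewrite /nu; nra.
have hnu2 : nu <= 2.
  rewrite /nu; have := hgamma_min i0; have := hgam_le i0; have := hLi i0; nra.
have hgu : forall i j, g i (u i) j = 0 := fun i => grad_min_zero (hgrad i) (hu i).
have sci : forall i x y, f i x + inner (g i x) (vsub y x) + mu i / 2 * nsq (vsub y x) <= f i y.
  move=> i x y; have := hsc i x y; rewrite vnorm_sq; lra.
have dli : forall i x y, f i y <= f i x + inner (g i x) (vsub y x) + Ls i / 2 * nsq (vsub y x).
  move=> i x y; apply: descent; [exact: hgrad | exact: hlip | exact: Rlt_le (hL i)].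
have hblock : forall i (x : vec p),
    nsq (vsub (vsub x (vscale alpha (g i x))) (u i)) <= (1 - nu) * nsq (vsub x (u i)).
  move=> i x.
  case: (leqP p 0) => hp.
    rewrite !nsq_empty //; lra.
  have hmuL := mu_le_L hp (hsc i) (hlip i).
  have hal : alpha <= 2 / (mu i + Ls i).
    have := hmu i; have := hL i; have := hLi i => h1 h2 h3.
    apply: (Rmult_le_reg_r (mu i + Ls i)); first lra.
    have -> : 2 / (mu i + Ls i) * (mu i + Ls i) = 2 by field; lra.
    nra.
  have := contraction (hmu i) (hL i) (sci i) (dli i) (hlip i) x (u i) halpha hal.
  have -> : vsub (u i) (vscale alpha (g i (u i))) = u i.
    apply: functional_extensionality => j; rewrite /vsub /vscale hgu; ring.
  move=> h; apply: Rle_trans h _; apply: Rmult_le_compat_r; first exact: nsq_ge0.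
  have := hgamma_min i; rewrite /nu.
  have e : 2 * alpha * mu i * Ls i / (mu i + Ls i) = 2 * alpha * (mu i * Ls i / (mu i + Ls i)).
    field; have := hmu i; have := hL i; lra.
  rewrite e; nra.
have hU : 0 <= snorm u := snorm_ge0 u.
have hr0 : 0 <= snorm (ssub y0 u) := snorm_ge0 _.
have SN := stack_nonexp hn hWsym hWstoch hW1simple hbeta_max hbeta rayleigh.
have SD := stack_dev hn hWsym hWstoch hW1simple hbeta_max hbeta rayleigh.
have snZ : forall y : svec n p, snorm (iter t (mixZ W) y) <= snorm y.
  move=> y; apply: sqrt_le_1_alt; exact: SN.
have hq : 4 / nu * nu = 4 by field; lra.
have hq0 : 0 <= 4 / nu by apply: Rlt_le; apply: Rdiv_lt_0_compat; lra.
have hY : forall k, snorm (ssub (near_y W t alpha g y0 k) u) <= snorm (ssub y0 u) + 4 / nu * snorm u.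
  elim=> [|k IH].
    rewrite /=; have : 0 <= 4 / nu * snorm u by apply: Rmult_le_pos.
    lra.
  set Yk := near_y W t alpha g y0 k in IH *.
  set X := iter t (mixZ W) Yk.
  have eY : near_y W t alpha g y0 k.+1 = fun i => vsub (X i) (vscale alpha (g i (X i))) by [].
  rewrite eY.
  have h1 : ssq (ssub (fun i => vsub (X i) (vscale alpha (g i (X i)))) u) <= (1 - nu) * ssq (ssub X u).
    rewrite /ssq /sinner sumO_mull; apply: bigR_le => i _; exact: hblock.
  have eX : ssub X u = sadd (iter t (mixZ W) (ssub Yk u)) (ssub (iter t (mixZ W) u) u).
    rewrite iter_ssub; apply: functional_extensionality => i; apply: functional_extensionality => j.
    rewrite /ssub /sadd /vsub /vadd /X; ring.
  have h2 : snorm (ssub X u) <= snorm (ssub Yk u) + 2 * snorm u.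
    rewrite eX; apply: Rle_trans (snorm_add _ _) _.
    have := snZ (ssub Yk u); have := snorm_sub (iter t (mixZ W) u) u; have := snZ u; lra.
  have hsX := snorm_ge0 (ssub X u).
  have h3 : snorm (ssub (fun i => vsub (X i) (vscale alpha (g i (X i)))) u) <= (1 - nu / 2) * snorm (ssub X u).
    apply: sqrt_le_of_sq; first by apply: Rmult_le_pos => //; lra.
    change (ssq (ssub (fun i => vsub (X i) (vscale alpha (g i (X i)))) u) <= ((1 - nu / 2) * snorm (ssub X u)) ^ 2).
    rewrite Rpow_mult_distr snorm_sq.
    have := ssq_ge0 (ssub X u); nra.
  apply: Rle_trans h3 _.
  have hnu' : 0 <= 1 - nu / 2 by lra.
  have hsY := snorm_ge0 (ssub Yk u).
  have h4 : (1 - nu / 2) * snorm (ssub X u) <= (1 - nu / 2) * (snorm (ssub y0 u) + 4 / nu * snorm u + 2 * snorm u).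
    apply: Rmult_le_compat_l => //; lra.
  apply: Rle_trans h4 _.
  nra.
have hYD : forall k, snorm (near_y W t alpha g y0 k) <= D.
  move=> k.
  have e : near_y W t alpha g y0 k = sadd (ssub (near_y W t alpha g y0 k) u) u.
    apply: functional_extensionality => i; apply: functional_extensionality => j.
    rewrite /ssub /sadd /vsub /vadd; ring.
  rewrite e; apply: Rle_trans (snorm_add _ _) _.
  have := hY k.
  have e2 : D = snorm (ssub y0 u) + 4 / nu * snorm u + snorm u by rewrite /D; field; lra.
  rewrite e2; lra.
have hD0 : 0 <= D by apply: Rle_trans (snorm_ge0 _) (hYD 0%N).
have hbt : 0 < beta ^ t by apply: pow_lt; lra.
have hcons : forall k, sqrt (\big[Rplus/0]_(i < n)
     nsq (vsub (near_x W t alpha g y0 k i) (avg (near_x W t alpha g y0 k)))) <= beta ^ t * D.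
  move=> k; apply: sqrt_le_of_sq; first by apply: Rmult_le_pos; lra.
  have h := SD p t (near_y W t alpha g y0 k).
  apply: Rle_trans h _.
  rewrite pow_2t Rpow_mult_distr -snorm_sq.
  apply: Rmult_le_compat_l; first by apply: pow2_ge_0.
  have := hYD k; have := snorm_ge0 (near_y W t alpha g y0 k); nra.
have hGx := Gbar_min_zero hgrad hxstar.
have scb := Fbar_sc hsc.
have dlb := Fbar_dl hgrad hlip hL.
have lipb := Gbar_lip hn hlip.
have hc4 : alpha <= 2 / (fbar_const mu + fbar_const Ls) by exact: halpha2.
have ec2 : 1 - 2 * alpha * fbar_const mu * fbar_const Ls / (fbar_const mu + fbar_const Ls) = 1 - alpha * c2.
  rewrite /c2 /c2_const; field; lra.
have part1 : forall delta, 0 < delta -> forall k : nat,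
     (vnorm (vsub (xbar (S k)) xstar)) ^ 2
       <= c1sq delta * (vnorm (vsub (xbar k) xstar)) ^ 2 + c3sq delta * beta ^ (2 * t).
  move=> dl hdl k.
  set X := near_x W t alpha g y0 k.
  set xb := avg X.
  have hxb : xbar k = xb by [].
  set gb : vec p := fun j => / INR n * \big[Rplus/0]_(i < n) g i (X i) j.
  have hxS : xbar k.+1 = avg (near_y W t alpha g y0 k.+1) := avg_iter hWsym hWstoch t _.
  have hav : forall j, avg (near_y W t alpha g y0 k.+1) j = xb j - alpha * gb j.
    move=> j.
    change (/ INR n * \big[Rplus/0]_(i < n) (X i j - alpha * g i (X i) j)
      = / INR n * \big[Rplus/0]_(i < n) X i j - alpha * (/ INR n * \big[Rplus/0]_(i < n) g i (X i) j)).
    msum.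
  set a := vsub (vsub xb (vscale alpha (Gbar g xb))) (vsub xstar (vscale alpha (Gbar g xstar))).
  set b := vscale alpha (vsub (Gbar g xb) gb).
  have eab : vsub (xbar k.+1) xstar = vadd a b.
    apply: functional_extensionality => j.
    rewrite hxS /a /b /vsub /vadd /vscale hav hGx; ring.
  have ha : nsq a <= (1 - alpha * c2) * nsq (vsub xb xstar).
    rewrite -ec2; exact: (contraction hmub hLb scb dlb lipb xb xstar halpha hc4).
  have hb : vnorm (vsub (Gbar g xb) gb) <= L * (beta ^ t * D).
    have e : vsub (Gbar g xb) gb = vscale (/ INR n) (vsum (fun i => vsub (g i xb) (g i (X i)))).
      apply: functional_extensionality => j; rewrite /vsub /Gbar /gb /vscale /vsum; msum.
    have hin : 0 < / INR n by apply: Rinv_0_lt_compat.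
    rewrite e vnorm_scale Rabs_right; last lra.
    set S := sqrt (\big[Rplus/0]_(i < n) nsq (vsub (X i) xb)).
    have hS : S <= beta ^ t * D := hcons k.
    have hS0 : 0 <= S := sqrt_pos _.
    have hterm : forall i, vnorm (vsub (g i xb) (g i (X i))) <= L * S.
      move=> i; apply: Rle_trans (hlip i xb (X i)) _.
      rewrite vnorm_sub_comm.
      have h1 : vnorm (vsub (X i) xb) <= S.
        apply: sqrt_le_1_alt.
        exact: (@bigR_term_le n (fun i => nsq (vsub (X i) xb)) i (fun j => nsq_ge0 _)).
      have := hLi i; have := hL i; have := vnorm_ge0 (vsub (X i) xb); nra.
    apply: Rle_trans (Rmult_le_compat_l _ _ _ (Rlt_le _ _ hin) (vnorm_vsum _)) _.
    have h2 : \big[Rplus/0]_(i < n) vnorm (vsub (g i xb) (g i (X i))) <= INR n * (L * S).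
      rewrite -bigR_const; apply: bigR_le => i _; exact: hterm.
    have h3 : / INR n * (INR n * (L * S)) = L * S by field; lra.
    have := Rmult_le_compat_l _ _ _ (Rlt_le _ _ hin) h2.
    rewrite h3 => h4; apply: Rle_trans h4 _.
    apply: Rmult_le_compat_l; lra.
  rewrite eab hxb !vnorm_sq nsq_add.
  have hy := young (vnorm a) (vnorm b) (Rmult_lt_0_compat _ _ halpha hdl).
  have hcs := CS a b.
  rewrite !vnorm_sq in hy.
  have hnb : nsq b <= alpha ^ 2 * (L * (beta ^ t * D)) ^ 2.
    rewrite /b nsq_scale -vnorm_sq; apply: Rmult_le_compat_l; first by apply: pow2_ge_0.
    have := vnorm_ge0 (vsub (Gbar g xb) gb); nra.
  have hN := nsq_ge0 (vsub xb xstar).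
  have hna := nsq_ge0 a.
  have hnb0 := nsq_ge0 b.
  have hfac : 0 < 1 + alpha * dl by nra.
  have hinv : 0 < / (alpha * dl) by apply: Rinv_0_lt_compat; nra.
  have step1 : nsq a + 2 * inner a b + nsq b <= (1 + alpha * dl) * nsq a + (1 + / (alpha * dl)) * nsq b.
    lra.
  apply: Rle_trans step1 _.
  have step2 : (1 + alpha * dl) * nsq a <= (1 + alpha * dl) * ((1 - alpha * c2) * nsq (vsub xb xstar)).
    apply: Rmult_le_compat_l; lra.
  have step3 : (1 + / (alpha * dl)) * nsq b <= (1 + / (alpha * dl)) * (alpha ^ 2 * (L * (beta ^ t * D)) ^ 2).
    apply: Rmult_le_compat_l; lra.
  have e1 : (1 + alpha * dl) * ((1 - alpha * c2) * nsq (vsub xb xstar)) = c1sq dl * nsq (vsub xb xstar).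
    rewrite /c1sq; ring.
  have e2 : (1 + / (alpha * dl)) * (alpha ^ 2 * (L * (beta ^ t * D)) ^ 2) = c3sq dl * beta ^ (2 * t).
    rewrite /c3sq pow_2t; field; lra.
  lra.
split; first exact: part1.
move=> hac2 delta c1.
have hac2p : 0 < alpha * c2 by nra.
have hd : 0 < delta by rewrite /delta; apply: Rdiv_lt_0_compat; lra.
have hq1 : 0 < 1 - alpha * c2 / 2 by lra.
have hq2 : 1 - alpha * c2 / 2 < 1 by lra.
have hc1sq : c1 ^ 2 = 1 - alpha * c2 / 2 by rewrite /c1 pow2_sqrt; lra.
have hc1eq : c1sq delta = c1 ^ 2 by rewrite hc1sq /c1sq /delta; field; lra.
split; first exact hc1eq.
have hc1pos : 0 < c1 := sqrt_lt_R0 _ hq1.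
have hc1lt : c1 < 1.
  apply: (Rlt_le_trans _ (sqrt 1)); [apply: sqrt_lt_1_alt; lra | rewrite sqrt_1; lra].
split; first by split.
set C := c3sq delta * beta ^ (2 * t).
have hC : 0 <= C.
  rewrite /C /c3sq; apply: Rmult_le_pos; last by apply: pow_le; lra.
  have : 0 < / delta by apply: Rinv_0_lt_compat.
  have := pow2_ge_0 D; have := pow2_ge_0 L => h1 h2 h3.
  apply: Rmult_le_pos => //; apply: Rmult_le_pos => //; apply: Rmult_le_pos; lra.
set q := c1 ^ 2.
have hqp : 0 < q by rewrite /q hc1sq.
have hq1' : q < 1 by rewrite /q hc1sq.
have rec : forall k : nat, vnorm (vsub (xbar k.+1) xstar) ^ 2 <= q * vnorm (vsub (xbar k) xstar) ^ 2 + C.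
  move=> k; have := part1 delta hd k; rewrite hc1eq //.
have bnd : forall k : nat, vnorm (vsub (xbar k) xstar) ^ 2
    <= q ^ k * vnorm (vsub (xbar 0%N) xstar) ^ 2 + C / (1 - q).
  have hCq : 0 <= C / (1 - q) by apply: Rmult_le_pos => //; apply: Rlt_le; apply: Rinv_0_lt_compat; lra.
  elim=> [|k IH]; first by rewrite /= Rmult_1_l; lra.
  apply: Rle_trans (rec k) _.
  have e : q * (q ^ k * vnorm (vsub (xbar 0%N) xstar) ^ 2 + C / (1 - q)) + C
     = q ^ k.+1 * vnorm (vsub (xbar 0%N) xstar) ^ 2 + C / (1 - q).
    rewrite /=; field; lra.
  rewrite -e; apply: Rplus_le_compat_r; apply: Rmult_le_compat_l; lra.
move=> k.
set e := vnorm (vsub (xbar k) xstar).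
set e0 := vnorm (vsub (xbar 0%N) xstar).
have he : 0 <= e := vnorm_ge0 _.
have he0 : 0 <= e0 := vnorm_ge0 _.
set A := c1 ^ k * e0.
set B := L * D * beta ^ t / c2 * sqrt (2 * (2 - alpha * c2)).
have hA : 0 <= A by apply: Rmult_le_pos => //; apply: pow_le; lra.
have hB : 0 <= B.
  apply: Rmult_le_pos; last exact: sqrt_pos.
  apply: Rmult_le_pos; last by apply: Rlt_le; apply: Rinv_0_lt_compat.
  apply: Rmult_le_pos; last by apply: pow_le; lra.
  apply: Rmult_le_pos; lra.
have hs2 : sqrt (2 * (2 - alpha * c2)) ^ 2 = 2 * (2 - alpha * c2) by rewrite pow2_sqrt; lra.
have hB2 : B ^ 2 = C / (1 - q).
  have eB : B ^ 2 = (L * D * beta ^ t / c2) ^ 2 * sqrt (2 * (2 - alpha * c2)) ^ 2 by rewrite /B; ring.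
  rewrite eB hs2 /C /c3sq /q hc1sq /delta pow_2t; field; lra.
have hA2 : A ^ 2 = q ^ k * e0 ^ 2.
  rewrite /A /q Rpow_mult_distr; f_equal.
  by rewrite -!pow_mult Nat.mul_comm.
have := bnd k; rewrite -/e -/e0 -hA2 -hB2 => h.
nra.
Qed.
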